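(* Let $\Gamma=\mathbb{Z}\times F_2=\langle h,c_1,c_2\mid hc_1=c_1h,\ hc_2=c_2h\rangle$, set $c_3=c_1c_2$, and in $\mathbb{C}[{\mathcal{X}}(\Gamma)]$ set $u=t_h$, $x_i=t_{c_i}$, $y_i=t_{hc_i}$ for $i=1,2,3$. Then the $\mathbb{C}$-algebra map $\mathbb{C}[u,x_1,x_2,x_3,y_1,y_2,y_3]\to\mathbb{C}[{\mathcal{X}}(\Gamma)]$ (polynomial variables sent to the elements of the same name) is surjective with kernel the ideal $J$ generated by (1) $u^2+x_i^2+y_i^2-ux_iy_i-4$ for $i=1,2,3$; (2) $2y_i-(ux_i+x_jy_3-x_3y_j)$ for $\{i,j\}=\{1,2\}$; (3) $2y_3-\big(u(x_3-x_1x_2)+y_1x_2+y_2x_1\big)$; (4) $2x_3-(uy_3+x_1x_2-y_1y_2)$. Hence $\mathbb{C}[{\mathcal{X}}(\Gamma)]\cong\mathbb{C}[u,x_1,x_2,x_3,y_1,y_2,y_3]/J$.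
   Context: For a finitely generated group $\Gamma$, $\mathbb{C}[{\mathcal{X}}(\Gamma)]$ is the coordinate ring of the $\mathrm{SL}_2(\mathbb{C})$-character scheme of $\Gamma$; equivalently, the commutative $\mathbb{C}$-algebra generated by symbols $t_x$, $x\in\Gamma$, subject to $t_{xy}+t_{xy^{-1}}=t_xt_y$, $t_{xy}=t_{yx}$ ($x,y\in\Gamma$) and $t_1=2$. *)

(* Defs.v *)
From HB Require Import structures.
From mathcomp Require Import all_boot all_order all_algebra.
From mathcomp Require Import finmap.
From mathcomp Require Import complex.
From mathcomp Require Import Rstruct.
From mathcomp.multinomials Require Import monalg.

Set Implicit Arguments.
Unset Strict Implicit.
Unset Printing Implicit Defensive.

Import Order.TTheory GRing.Theory Num.Theory.
Local Open Scope ring_scope.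

Definition C : Type := complex Rdefinitions.R.

(* The free group F_2 on c1 (letter false) and c2 (letter true), as
   freely reduced words.  A letter is (generator, is_inverse).         *)
Definition letter := (bool * bool)%type.
Definition inv_letter (l : letter) : letter := (l.1, ~~ l.2).

Definition reduced (w : seq letter) : bool :=
  sorted (fun a b => b != inv_letter a) w.

Fixpoint red (w : seq letter) : seq letter :=
  match w with
  | [::] => [::]
  | l :: w' =>
      match red w' with
      | [::] => [:: l]
      | l' :: r => if l' == inv_letter l then r else l :: l' :: r
      end
  end.

Lemma red_reduced w : reduced (red w).
Proof.
elim: w => [|l w IH] //=.
case E: (red w) => [|l' r] //.
rewrite E in IH.
case: ifP => H.
  exact: (path_sorted IH).
by rewrite /reduced /= H.
Qed.

Definition F2 := {w : seq letter | reduced w}.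

Definition mkF2 (w : seq letter) : F2 := exist _ (red w) (red_reduced w).
Definition F2one : F2 := mkF2 [::].
Definition F2mul (x y : F2) : F2 := mkF2 (sval x ++ sval y).
Definition F2inv (x : F2) : F2 := mkF2 (rev (map inv_letter (sval x))).

Definition Gam := (int * F2)%type.
Definition Gone : Gam := (0%R, F2one).
Definition Gmul (x y : Gam) : Gam := (x.1 + y.1, F2mul x.2 y.2).
Definition Ginv (x : Gam) : Gam := (- x.1, F2inv x.2).

Definition gh  : Gam := (1%R, F2one).
Definition gc1 : Gam := (0%R, mkF2 [:: (false, false)]).
Definition gc2 : Gam := (0%R, mkF2 [:: (true, false)]).
Definition gc3 : Gam := Gmul gc1 gc2.

Definition ideal_gen (R : comRingType) (S : R -> Prop) (p : R) : Prop :=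
  exists (n : nat) (a s : 'I_n -> R),
    (forall i, S (s i)) /\ p = \sum_(i < n) a i * s i.

(* The polynomial ring C[t_x : x in Gam] and the defining relations of
   the coordinate ring C[X(Gam)] of the SL_2(C)-character scheme.      *)
Definition PGam := {malg C[cmonom Gam]}.
Definition tvar (x : Gam) : PGam := << ucm x >>.

Definition char_rel (p : PGam) : Prop :=
  (exists x y : Gam,
      p = tvar (Gmul x y) + tvar (Gmul x (Ginv y)) - tvar x * tvar y)
  \/ (exists x y : Gam, p = tvar (Gmul x y) - tvar (Gmul y x))
  \/ p = tvar Gone - 2.

(* C[X(Gam)] = PGam / charI ; membership in charI is equality to 0 in
   the quotient. *)
Definition charI (p : PGam) : Prop := ideal_gen char_rel p.

Definition Q7 := {mpoly C[7]}.
Definition V (i : 'I_7) : Q7 := << ucm i >>.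
Definition vu  : Q7 := V (@Ordinal 7 0 isT).
Definition vx1 : Q7 := V (@Ordinal 7 1 isT).
Definition vx2 : Q7 := V (@Ordinal 7 2 isT).
Definition vx3 : Q7 := V (@Ordinal 7 3 isT).
Definition vy1 : Q7 := V (@Ordinal 7 4 isT).
Definition vy2 : Q7 := V (@Ordinal 7 5 isT).
Definition vy3 : Q7 := V (@Ordinal 7 6 isT).

Definition img_var (i : 'I_7) : PGam :=
  match val i with
  | 0 => tvar gh
  | 1 => tvar gc1
  | 2 => tvar gc2
  | 3 => tvar gc3
  | 4 => tvar (Gmul gh gc1)
  | 5 => tvar (Gmul gh gc2)
  | _ => tvar (Gmul gh gc3)
  end.

(* The C-algebra map C[u,...,y3] -> C[t_x] sending each variable to its
   image (composing with the projection onto C[X(Gam)] gives phi). *)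
Definition psi (q : Q7) : PGam :=
  mmap (fun c : C => c%:MP)
       (fun m : cmonom 'I_7 => \prod_(i < 7) img_var i ^+ m i) q.

Definition Jgens : seq Q7 :=
  [:: vu ^+ 2 + vx1 ^+ 2 + vy1 ^+ 2 - vu * vx1 * vy1 - 4;
      vu ^+ 2 + vx2 ^+ 2 + vy2 ^+ 2 - vu * vx2 * vy2 - 4;
      vu ^+ 2 + vx3 ^+ 2 + vy3 ^+ 2 - vu * vx3 * vy3 - 4;
      2 * vy1 - (vu * vx1 + vx2 * vy3 - vx3 * vy2);
      2 * vy2 - (vu * vx2 + vx1 * vy3 - vx3 * vy1);
      2 * vy3 - (vu * (vx3 - vx1 * vx2) + vy1 * vx2 + vy2 * vx1);
      2 * vx3 - (vu * vy3 + vx1 * vx2 - vy1 * vy2)].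

Definition J (q : Q7) : Prop := ideal_gen (fun g => g \in Jgens) q.

(* Main.v *)
Require Import Defs.
From HB Require Import structures.
From mathcomp Require Import all_boot all_order all_algebra.
From mathcomp Require Import finmap complex Rstruct.
From mathcomp.multinomials Require Import monalg.
From mathcomp Require Import ring zify.
Import GRing.Theory.
Local Open Scope ring_scope.

Section Ideal.
Variable S : comRingType.
Variable P : S -> Prop.
Local Notation I := (ideal_gen P).

Lemma ideal0 : I 0.
Proof. exists 0%N, (fun _ => 0), (fun _ => 0); split; first by case.
by rewrite big_ord0. Qed.

Lemma idealG s : P s -> I s.
Proof. move=> Ps; exists 1%N, (fun _ => 1), (fun _ => s); split=> //.
by rewrite big_ord1 mul1r. Qed.

Lemma idealD a b : I a -> I b -> I (a + b).
Proof.
move=> [n [ca [sa [Ha ->]]]] [m [cb [sb [Hb ->]]]].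
exists (n + m)%N, (fun i => match split i with inl j => ca j | inr j => cb j end),
  (fun i => match split i with inl j => sa j | inr j => sb j end); split.
  by move=> i; case: (split i).
rewrite big_split_ord /=; congr (_ + _); apply: eq_bigr => i _.
  by rewrite (unsplitK (inl i : 'I_n + 'I_m)).
by rewrite (unsplitK (inr i : 'I_n + 'I_m)).
Qed.

Lemma idealM c a : I a -> I (c * a).
Proof.
move=> [n [ca [sa [Ha ->]]]].
exists n, (fun i => c * ca i), sa; split=> //.
by rewrite big_distrr /=; apply: eq_bigr => i _; rewrite mulrA.
Qed.

Lemma idealN a : I a -> I (- a).
Proof. by move=> Ha; rewrite -mulN1r; apply: idealM. Qed.

Lemma idealB a b : I a -> I b -> I (a - b).
Proof. by move=> Ha Hb; apply: idealD => //; apply: idealN. Qed.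

Lemma ideal_eq a b : a = b -> I a -> I b.
Proof. by move=> ->. Qed.
End Ideal.

Arguments inv_letter : simpl never.
Definition stepw (l : letter) (r : seq letter) : seq letter :=
  match r with
  | [::] => [:: l]
  | l' :: r' => if l' == inv_letter l then r' else l :: l' :: r'
  end.

Lemma red_cons l w : red (l :: w) = stepw l (red w).
Proof. by []. Qed.

Lemma inv_letterK : involutive inv_letter.
Proof. by case=> a b; rewrite /inv_letter /= negbK. Qed.

Lemma inv_letter_neq l : inv_letter l != l.
Proof. by case: l => a b; rewrite /inv_letter xpair_eqE eqxx /=; case: b. Qed.

Lemma red_id r : reduced r -> red r = r.
Proof.
elim: r => [|l r IH] //= Hr.
have Hr' : reduced r by exact: (path_sorted Hr).
rewrite IH //; case: r Hr Hr' IH => [|l' r'] // /andP [H1 _] _ _.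
by rewrite /stepw (negbTE H1).
Qed.

Lemma stepw_inv l r : reduced r -> stepw l (stepw (inv_letter l) r) = r.
Proof.
case: r => [|l' r'] /=; first by rewrite eqxx.
case: ifP => [/eqP E|E] Hr.
  rewrite E inv_letterK; case: r' Hr => [|l'' r''] //= /andP [H1 _].
  by rewrite E inv_letterK in H1; rewrite (negbTE H1).
by rewrite /= eqxx.
Qed.

Lemma red_cancel l w : red (l :: inv_letter l :: w) = red w.
Proof. by rewrite !red_cons stepw_inv // red_reduced. Qed.

Lemma red_catr w v : red (w ++ v) = red (w ++ red v).
Proof. elim: w => [|l w IH] /=; first by rewrite (@red_id _ (red_reduced v)).
by rewrite IH. Qed.

Lemma red_mid w l v : red (w ++ l :: inv_letter l :: v) = red (w ++ v).
Proof. elim: w => [|a w IH] /=; first exact: red_cancel.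
by rewrite IH. Qed.

Lemma red_catl w v : red (w ++ v) = red (red w ++ v).
Proof.
elim: w => [|l w IH]; first by [].
rewrite cat_cons red_cons IH -(red_cons l (red w ++ v)) [red (l :: w)]red_cons.
case: (red w) => [|l' r]; first by [].
rewrite /stepw; case: ifP => [/eqP -> | _] //.
by rewrite cat_cons red_cancel.
Qed.

Definition inv_w (w : seq letter) := rev (map inv_letter w).

Lemma inv_w_cons l w : inv_w (l :: w) = inv_w w ++ [:: inv_letter l].
Proof. by rewrite /inv_w /= rev_cons cats1. Qed.

Lemma inv_w_cat w v : inv_w (w ++ v) = inv_w v ++ inv_w w.
Proof. by rewrite /inv_w map_cat rev_cat. Qed.

Lemma red_inv w : red (inv_w (red w)) = red (inv_w w).
Proof.
elim: w => [|l w IH] //.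
rewrite [inv_w (l :: w)]inv_w_cons red_catl -IH -red_catl red_cons.
case: (red w) => [|l' r]; first by [].
rewrite /stepw; case: ifP => [/eqP -> | _].
  by rewrite inv_w_cons inv_letterK -catA red_mid cats0.
by rewrite [inv_w (l :: _)]inv_w_cons.
Qed.

Lemma red_idem w : red (red w) = red w.
Proof. exact/red_id/red_reduced. Qed.

Lemma mkF2_eq w v : red w = red v -> mkF2 w = mkF2 v.
Proof. by move=> E; apply/val_inj => /=. Qed.

Lemma F2_mk (x : F2) : mkF2 (sval x) = x.
Proof. by apply/val_inj => /=; apply: red_id; case: x. Qed.

Lemma Gmul_mk n w m v :
  Gmul (n, mkF2 w) (m, mkF2 v) = (n + m, mkF2 (w ++ v)).
Proof.
rewrite /Gmul /F2mul /=; congr (_, _); apply: mkF2_eq.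
by rewrite -red_catl -red_catr.
Qed.

Lemma Ginv_mk n w : Ginv (n, mkF2 w) = (- n, mkF2 (inv_w w)).
Proof.
rewrite /Ginv /F2inv /=; congr (_, _); apply: mkF2_eq.
exact: red_inv.
Qed.

Lemma Gam_mk (g : Gam) : g = (g.1, mkF2 (sval g.2)).
Proof. by case: g => n x /=; rewrite F2_mk. Qed.
Section Alg.
Variable R : comRingType.
Variables u x1 x2 x3 y1 y2 y3 : R.
Record R8 := mk8 { c0 : R; c1 : R; c2 : R; c3 : R; c4 : R; c5 : R; c6 : R; c7 : R }.
Definition rmul (a b : R8) : R8 :=
  let: mk8 a0 a1 a2 a3 a4 a5 a6 a7 := a in
  let: mk8 b0 b1 b2 b3 b4 b5 b6 b7 := b in
  mk8
   (a0*b0 + (- 1)*a1*b1 + (x3 - x1*x2)*a2*b1 + (- 1)*a2*b2 + (- x1)*a2*b3 + (- x2)*a3*b1 + (- 1)*a3*b3 + (- 1)*a4*b4 + a5*b5 + (- x3 + x1*x2)*a6*b5 + a6*b6 + (x1)*a6*b7 + (x2)*a7*b5 + a7*b7)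
   (a0*b1 + a1*b0 + (x1)*a1*b1 + (x2)*a2*b1 + a2*b3 + (x3)*a3*b1 + (- 1)*a3*b2 + (- 1)*a4*b5 + (- 1)*a5*b4 + (- x1)*a5*b5 + (- x2)*a6*b5 + (- 1)*a6*b7 + (- x3)*a7*b5 + a7*b6)
   (a0*b2 + (- 1)*a1*b3 + a2*b0 + (x1)*a2*b1 + (x2)*a2*b2 + (x3)*a2*b3 + a3*b1 + (- 1)*a4*b6 + a5*b7 + (- 1)*a6*b4 + (- x1)*a6*b5 + (- x2)*a6*b6 + (- x3)*a6*b7 + (- 1)*a7*b5)
   (a0*b3 + a1*b2 + (x1)*a1*b3 + (- 1)*a2*b1 + a3*b0 + (x2)*a3*b2 + (x3)*a3*b3 + (- 1)*a4*b7 + (- 1)*a5*b6 + (- x1)*a5*b7 + a6*b5 + (- 1)*a7*b4 + (- x2)*a7*b6 + (- x3)*a7*b7)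
   (a0*b4 + (- 1)*a1*b5 + (x3 - x1*x2)*a2*b5 + (- 1)*a2*b6 + (- x1)*a2*b7 + (- x2)*a3*b5 + (- 1)*a3*b7 + a4*b0 + (u)*a4*b4 + (- 1)*a5*b1 + (- u)*a5*b5 + (x3 - x1*x2)*a6*b1 + (- 1)*a6*b2 + (- x1)*a6*b3 + (u*x3 - u*x1*x2)*a6*b5 + (- u)*a6*b6 + (- u*x1)*a6*b7 + (- x2)*a7*b1 + (- 1)*a7*b3 + (- u*x2)*a7*b5 + (- u)*a7*b7)
   (a0*b5 + a1*b4 + (x1)*a1*b5 + (x2)*a2*b5 + a2*b7 + (x3)*a3*b5 + (- 1)*a3*b6 + a4*b1 + (u)*a4*b5 + a5*b0 + (x1)*a5*b1 + (u)*a5*b4 + (u*x1)*a5*b5 + (x2)*a6*b1 + a6*b3 + (u*x2)*a6*b5 + (u)*a6*b7 + (x3)*a7*b1 + (- 1)*a7*b2 + (u*x3)*a7*b5 + (- u)*a7*b6)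
   (a0*b6 + (- 1)*a1*b7 + a2*b4 + (x1)*a2*b5 + (x2)*a2*b6 + (x3)*a2*b7 + a3*b5 + a4*b2 + (u)*a4*b6 + (- 1)*a5*b3 + (- u)*a5*b7 + a6*b0 + (x1)*a6*b1 + (x2)*a6*b2 + (x3)*a6*b3 + (u)*a6*b4 + (u*x1)*a6*b5 + (u*x2)*a6*b6 + (u*x3)*a6*b7 + a7*b1 + (u)*a7*b5)
   (a0*b7 + a1*b6 + (x1)*a1*b7 + (- 1)*a2*b5 + a3*b4 + (x2)*a3*b6 + (x3)*a3*b7 + a4*b3 + (u)*a4*b7 + a5*b2 + (x1)*a5*b3 + (u)*a5*b6 + (u*x1)*a5*b7 + (- 1)*a6*b1 + (- u)*a6*b5 + a7*b0 + (x2)*a7*b2 + (x3)*a7*b3 + (u)*a7*b4 + (u*x2)*a7*b6 + (u*x3)*a7*b7).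
Definition T (a : R8) : R :=
  let: mk8 a0 a1 a2 a3 a4 a5 a6 a7 := a in
  (2)*a0 + (x1)*a1 + (x2)*a2 + (x3)*a3 + (u)*a4 + (y1)*a5 + (y2)*a6 + (y3)*a7.
Definition K (a : R8) : R8 :=
  let: mk8 a0 a1 a2 a3 a4 a5 a6 a7 := a in
  mk8
   ((1)*a0 + (x1)*a1 + (x2)*a2 + (x3)*a3 + (u)*a4 + (u*x1)*a5 + (u*x2)*a6 + (u*x3)*a7)
   ((- 1)*a1 + (- u)*a5)
   ((- 1)*a2 + (- u)*a6)
   ((- 1)*a3 + (- u)*a7)
   ((- 1)*a4 + (- x1)*a5 + (- x2)*a6 + (- x3)*a7)
   ((1)*a5)
   ((1)*a6)
   ((1)*a7).
Lemma rmulA a b c : rmul (rmul a b) c = rmul a (rmul b c).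
Proof. case: a => a0 a1 a2 a3 a4 a5 a6 a7; case: b => b0 b1 b2 b3 b4 b5 b6 b7; case: c => d0 d1 d2 d3 d4 d5 d6 d7 /=.
Time congr mk8; ring. Time Qed.
Lemma Kanti a b : K (rmul a b) = rmul (K b) (K a).
Proof. case: a => a0 a1 a2 a3 a4 a5 a6 a7; case: b => b0 b1 b2 b3 b4 b5 b6 b7 /=.
Time congr mk8; ring. Time Qed.
Definition Ecoef (a b : R8) : seq R :=
  let: mk8 a0 a1 a2 a3 a4 a5 a6 a7 := a in
  let: mk8 b0 b1 b2 b3 b4 b5 b6 b7 := b in
  [::
   (- 2)*a5*b5 + (- x2)*a5*b7 + (- x2)*a7*b5;
   (- 2)*a6*b6 + (- x1)*a6*b7 + (- x1)*a7*b6;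
   (- 2)*a7*b7;
   (2)*a2*b7 + (- 2)*a3*b6 + (u)*a6*b7 + (- u)*a7*b6;
   (- 2)*a1*b7 + (2)*a3*b5 + (- u)*a5*b7 + (u)*a7*b5;
   (2)*a1*b6 + (- 2)*a2*b5 + (- y1)*a5*b7 + (- 2*u)*a6*b5 + (- y2)*a6*b7 + (- y1)*a7*b5 + (- y2)*a7*b6;
   (- 2)*a5*b6 + (- x1)*a5*b7 + (- 2)*a6*b5 + (- x2)*a6*b7 + (- x1)*a7*b5 + (- x2)*a7*b6].
Definition Ccoef (a b : R8) : seq R :=
  let: mk8 a0 a1 a2 a3 a4 a5 a6 a7 := a in
  let: mk8 b0 b1 b2 b3 b4 b5 b6 b7 := b in
  [::
   0;
   0;
   0;
   (1)*a2*b7 + (- 1)*a3*b6 + (1)*a6*b3 + (u)*a6*b7 + (- 1)*a7*b2 + (- u)*a7*b6;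
   (- 1)*a1*b7 + (1)*a3*b5 + (- 1)*a5*b3 + (- u)*a5*b7 + (1)*a7*b1 + (u)*a7*b5;
   (1)*a1*b6 + (- 1)*a2*b5 + (1)*a5*b2 + (u)*a5*b6 + (- 1)*a6*b1 + (- u)*a6*b5;
   0].
Definition gl : seq R :=
  [:: u ^+ 2 + x1 ^+ 2 + y1 ^+ 2 - u * x1 * y1 - 4;
      u ^+ 2 + x2 ^+ 2 + y2 ^+ 2 - u * x2 * y2 - 4;
      u ^+ 2 + x3 ^+ 2 + y3 ^+ 2 - u * x3 * y3 - 4;
      2 * y1 - (u * x1 + x2 * y3 - x3 * y2);
      2 * y2 - (u * x2 + x1 * y3 - x3 * y1);
      2 * y3 - (u * (x3 - x1 * x2) + y1 * x2 + y2 * x1);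
      2 * x3 - (u * y3 + x1 * x2 - y1 * y2)].

Definition r1 := mk8 1 0 0 0 0 0 0 0.
Definition eC1 := mk8 0 1 0 0 0 0 0 0.
Definition eC2 := mk8 0 0 1 0 0 0 0 0.
Definition eH := mk8 0 0 0 0 1 0 0 0.
Definition iC1 := mk8 x1 (-1) 0 0 0 0 0 0.
Definition iC2 := mk8 x2 0 (-1) 0 0 0 0 0.
Definition iH := mk8 u 0 0 0 (-1) 0 0 0.

Ltac d8 a := case: a => ? ? ? ? ? ? ? ?.

Lemma rmul1r a : rmul r1 a = a.
Proof. d8 a; rewrite /=; congr mk8; ring. Qed.
Lemma rmulr1 a : rmul a r1 = a.
Proof. d8 a; rewrite /=; congr mk8; ring. Qed.
Lemma C1iC1 : rmul eC1 iC1 = r1. Proof. rewrite /=; congr mk8; ring. Qed.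
Lemma iC1C1 : rmul iC1 eC1 = r1. Proof. rewrite /=; congr mk8; ring. Qed.
Lemma C2iC2 : rmul eC2 iC2 = r1. Proof. rewrite /=; congr mk8; ring. Qed.
Lemma iC2C2 : rmul iC2 eC2 = r1. Proof. rewrite /=; congr mk8; ring. Qed.
Lemma HiH : rmul eH iH = r1. Proof. rewrite /=; congr mk8; ring. Qed.
Lemma iHH : rmul iH eH = r1. Proof. rewrite /=; congr mk8; ring. Qed.
Lemma Hcentral a : rmul eH a = rmul a eH.
Proof. d8 a; rewrite /=; congr mk8; ring. Qed.
Lemma iHcentral a : rmul iH a = rmul a iH.
Proof. d8 a; rewrite /=; congr mk8; ring. Qed.
Lemma K_r1 : K r1 = r1. Proof. rewrite /=; congr mk8; ring. Qed.
Lemma K_C1 : K eC1 = iC1. Proof. rewrite /=; congr mk8; ring. Qed.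
Lemma K_iC1 : K iC1 = eC1. Proof. rewrite /=; congr mk8; ring. Qed.
Lemma K_C2 : K eC2 = iC2. Proof. rewrite /=; congr mk8; ring. Qed.
Lemma K_iC2 : K iC2 = eC2. Proof. rewrite /=; congr mk8; ring. Qed.
Lemma K_H : K eH = iH. Proof. rewrite /=; congr mk8; ring. Qed.
Lemma K_iH : K iH = eH. Proof. rewrite /=; congr mk8; ring. Qed.
Lemma T_r1 : T r1 = 2. Proof. rewrite /=; ring. Qed.
Lemma T_H : T eH = u. Proof. rewrite /=; ring. Qed.
Lemma T_C1 : T eC1 = x1. Proof. rewrite /=; ring. Qed.
Lemma T_C2 : T eC2 = x2. Proof. rewrite /=; ring. Qed.
Lemma T_C3 : T (rmul eC1 eC2) = x3. Proof. rewrite /=; ring. Qed.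
Lemma T_HC1 : T (rmul eH eC1) = y1. Proof. rewrite /=; ring. Qed.
Lemma T_HC2 : T (rmul eH eC2) = y2. Proof. rewrite /=; ring. Qed.
Lemma T_HC3 : T (rmul eH (rmul eC1 eC2)) = y3. Proof. rewrite /=; ring. Qed.

Lemma Ecert a b : 2 * (T (rmul a b) + T (rmul a (K b)) - T a * T b) =
  \sum_(k < 7) nth 0 (Ecoef a b) k * nth 0 gl k.
Proof.
rewrite !big_ord_recr big_ord0 /=.
d8 a; d8 b; rewrite /=; ring.
Qed.
Lemma Ccert a b : T (rmul a b) - T (rmul b a) =
  \sum_(k < 7) nth 0 (Ccoef a b) k * nth 0 gl k.
Proof.
rewrite !big_ord_recr big_ord0 /=.
d8 a; d8 b; rewrite /=; ring.
Qed.
Arguments rmul : simpl never.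
Arguments K : simpl never.
Arguments T : simpl never.

Definition gen (l : letter) : R8 :=
  match l with
  | (false, false) => eC1 | (false, true) => iC1
  | (true, false) => eC2 | (true, true) => iC2
  end.

Lemma gen_inv l : rmul (gen l) (gen (inv_letter l)) = r1.
Proof.
case: l => [[] []]; rewrite /inv_letter /=.
all: by congr mk8; ring.
Qed.

Lemma K_gen l : K (gen l) = gen (inv_letter l).
Proof.
case: l => [[] []]; rewrite /inv_letter /=.
all: by congr mk8; ring.
Qed.

Definition vecw (w : seq letter) : R8 := foldr (fun l acc => rmul (gen l) acc) r1 w.

Lemma vecw_cat w v : vecw (w ++ v) = rmul (vecw w) (vecw v).
Proof.
elim: w => [|l w IH] /=; first by rewrite rmul1r.
by rewrite IH rmulA.
Qed.

Lemma vecw_stepw l r : vecw (stepw l r) = rmul (gen l) (vecw r).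
Proof.
case: r => [|l' r] //=.
case: ifP => [/eqP -> | _] //.
by rewrite -rmulA gen_inv rmul1r.
Qed.

Lemma vecw_red w : vecw (red w) = vecw w.
Proof.
elim: w => [|l w IH] //.
by rewrite red_cons vecw_stepw IH.
Qed.

Lemma vecw_inv w : vecw (inv_w w) = K (vecw w).
Proof.
elim: w => [|l w IH]; first by rewrite /= K_r1.
have E : vecw [:: inv_letter l] = gen (inv_letter l) by apply: rmulr1.
by rewrite inv_w_cons vecw_cat IH E -K_gen Kanti.
Qed.

Definition hpow (n : int) : R8 :=
  match n with
  | Posz k => iter k (rmul eH) r1
  | Negz k => iter k.+1 (rmul iH) r1
  end.

Lemma r1central a : rmul r1 a = rmul a r1.
Proof. by rewrite rmul1r rmulr1. Qed.

Lemma iter_central (e : R8) (He : forall a, rmul e a = rmul a e) k a :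
  rmul (iter k (rmul e) r1) a = rmul a (iter k (rmul e) r1).
Proof.
elim: k => [|k IH] /=; first exact: r1central.
by rewrite rmulA IH -rmulA He rmulA.
Qed.

Lemma hcentral n a : rmul (hpow n) a = rmul a (hpow n).
Proof.
case: n => k /=; first exact: iter_central Hcentral k a.
exact: iter_central iHcentral k.+1 a.
Qed.

Lemma hpow0 : hpow 0 = r1. Proof. by []. Qed.

Lemma hpowS n : hpow (n + 1) = rmul eH (hpow n).
Proof.
case: n => [k|[|k]].
- by have -> : (Posz k + 1 = Posz k.+1)%R by rewrite -addn1 PoszD.
- by rewrite /= rmulr1 HiH.
- have -> : (Negz k.+1 + 1 = Negz k)%R by rewrite !NegzE; lia.
  by rewrite [hpow (Negz k.+1)]/= -rmulA HiH rmul1r.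
Qed.

Lemma hpowP n : hpow (n - 1) = rmul iH (hpow n).
Proof.
case: n => [[|k]|k].
- by [].
- have -> : (Posz k.+1 - 1 = Posz k)%R by lia.
  by rewrite [hpow (Posz k.+1)]/= -rmulA iHH rmul1r.
- by have -> : (Negz k - 1 = Negz k.+1)%R by rewrite !NegzE; lia.
Qed.

Lemma hpowD m n : hpow (m + n) = rmul (hpow m) (hpow n).
Proof.
case: n => k.
  elim: k => [|k IH]; first by rewrite addr0 hpow0 rmulr1.
  rewrite -addn1 PoszD addrA hpowS IH -rmulA Hcentral rmulA -hpowS.
  by [].
rewrite NegzE.
elim: k => [|k IH].
  have -> : hpow (- Posz 1) = rmul iH r1 by [].
  have -> : (m - Posz 1 = m - 1)%R by [].
  by rewrite hpowP rmulr1 iHcentral.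
have -> : (m - Posz k.+2 = (m - Posz k.+1) - 1)%R by lia.
have -> : (- Posz k.+2 = (- Posz k.+1) - 1)%R by lia.
by rewrite !hpowP IH -rmulA iHcentral rmulA.
Qed.

Lemma K_iter (e f : R8) (Kef : K e = f) (Hf : forall a, rmul f a = rmul a f) k :
  K (iter k (rmul e) r1) = iter k (rmul f) r1.
Proof.
elim: k => [|k IH] /=; first exact: K_r1.
by rewrite Kanti IH Kef -Hf.
Qed.

Lemma K_hpow n : K (hpow n) = hpow (- n).
Proof.
case: n => [[|k]|k].
- exact: K_r1.
- change (hpow (Posz k.+1)) with (iter k.+1 (rmul eH) r1); rewrite (@K_iter eH iH K_H iHcentral).
  by have -> : (- Posz k.+1 = Negz k)%R by rewrite NegzE.
- change (hpow (Negz k)) with (iter k.+1 (rmul iH) r1); rewrite (@K_iter iH eH K_iH Hcentral).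
  by have -> : (- Negz k = Posz k.+1)%R by rewrite NegzE opprK.
Qed.

Definition vec (g : Gam) : R8 := rmul (hpow g.1) (vecw (sval g.2)).

Lemma rmulACA_c a b c d : (forall z, rmul b z = rmul z b) ->
  rmul (rmul a b) (rmul c d) = rmul (rmul a c) (rmul b d).
Proof. move=> Hb. by rewrite !rmulA -(rmulA b c d) (Hb c) rmulA. Qed.

Lemma vec_mul x y : vec (Gmul x y) = rmul (vec x) (vec y).
Proof.
rewrite /vec /Gmul /F2mul /= vecw_red vecw_cat hpowD.
by apply: rmulACA_c => z; apply: hcentral.
Qed.

Lemma vec_inv x : vec (Ginv x) = K (vec x).
Proof.
rewrite /vec /Ginv /F2inv /= vecw_red.
rewrite -[rev _]/(inv_w (sval x.2)) vecw_inv Kanti K_hpow.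
by rewrite hcentral.
Qed.

Lemma vec_one : vec Gone = r1.
Proof. by rewrite /vec /= rmul1r. Qed.

Definition trG (g : Gam) : R := T (vec g).

Lemma gl_nth k : (k < 7)%N -> nth 0 gl k \in gl.
Proof. by move=> Hk; apply: mem_nth. Qed.

Lemma model_rel1 x y : ideal_gen (fun g => g \in gl)
  (2 * (trG (Gmul x y) + trG (Gmul x (Ginv y)) - trG x * trG y)).
Proof.
rewrite /trG !vec_mul vec_inv Ecert.
exists 7%N, (fun k => nth 0 (Ecoef (vec x) (vec y)) k), (fun k => nth 0 gl k).
by split=> // k; apply: gl_nth.
Qed.

Lemma model_rel2 x y : ideal_gen (fun g => g \in gl)
  (trG (Gmul x y) - trG (Gmul y x)).
Proof.
rewrite /trG !vec_mul Ccert.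
exists 7%N, (fun k => nth 0 (Ccoef (vec x) (vec y)) k), (fun k => nth 0 gl k).
by split=> // k; apply: gl_nth.
Qed.

Lemma model_one : trG Gone = 2.
Proof. by rewrite /trG vec_one T_r1. Qed.

Lemma model_h : trG gh = u.
Proof. by rewrite /trG /vec /= !rmulr1 T_H. Qed.
Lemma model_c1 : trG gc1 = x1.
Proof. by rewrite /trG /vec /= rmul1r rmulr1 T_C1. Qed.
Lemma model_c2 : trG gc2 = x2.
Proof. by rewrite /trG /vec /= rmul1r rmulr1 T_C2. Qed.
Lemma model_c3 : trG gc3 = x3.
Proof. by rewrite /trG /vec /= rmul1r rmulr1 T_C3. Qed.
Lemma model_hc1 : trG (Gmul gh gc1) = y1.
Proof. by rewrite /trG /vec /= !rmulr1 T_HC1. Qed.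
Lemma model_hc2 : trG (Gmul gh gc2) = y2.
Proof. by rewrite /trG /vec /= !rmulr1 T_HC2. Qed.
Lemma model_hc3 : trG (Gmul gh gc3) = y3.
Proof. by rewrite /trG /vec /= !rmulr1 T_HC3. Qed.

End Alg.

Section CMEval.
Variables (I : choiceType) (S : comRingType) (f : I -> S).

Definition cmeval (m : cmonom I) : S := \prod_(i <- finsupp m) f i ^+ m i.

Lemma cmeval_w (m : cmonom I) (d : {fset I}) : (finsupp m `<=` d)%fset ->
  cmeval m = \prod_(i <- d) f i ^+ m i.
Proof.
move=> le; apply: big_fset_incl => // x _ xn.
by move: xn; rewrite -cmE_neq0 negbK => /eqP ->; rewrite expr0.
Qed.

Lemma cmevalM (m1 m2 : cmonom I) : cmeval (mmul m1 m2) = cmeval m1 * cmeval m2.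
Proof.
rewrite (@cmeval_w m1 _ (fsubsetUl (finsupp m1) (finsupp m2))).
rewrite (@cmeval_w m2 _ (fsubsetUr (finsupp m1) (finsupp m2))) -big_split /=.
rewrite /cmeval mdomD.
by apply: eq_bigr => i _; rewrite cmM exprD.
Qed.

Lemma cmeval1 : cmeval (mone : cmonom I) = 1.
Proof. by rewrite /cmeval mdom1 big_seq_fset0. Qed.

Lemma cmevalU i : cmeval (ucm i) = f i.
Proof. by rewrite /cmeval mdomU big_seq_fset1 cmUU expr1. Qed.
End CMEval.

Definition trQ (g : Gam) : Q7 := trG _ vu vx1 vx2 vx3 vy1 vy2 vy3 g.

Definition hPhi (m : cmonom Gam) : Q7 := cmeval _ _ trQ m.
Lemma hPhi_mm : mmorphism hPhi.
Proof. split; [exact: cmevalM | exact: cmeval1]. Qed.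
HB.instance Definition _ := isMultiplicative.Build (cmonom Gam) Q7 hPhi hPhi_mm.

Definition Phi (p : PGam) : Q7 := mmap (@malgC (cmonom 'I_7) C) hPhi p.

Definition hpsi (m : cmonom 'I_7) : PGam := \prod_(i < 7) img_var i ^+ m i.
Lemma hpsi_mm : mmorphism hpsi.
Proof.
split.
  move=> m1 m2; rewrite /hpsi -big_split /=.
  by apply: eq_bigr => i _; rewrite cmM exprD.
by rewrite /hpsi big1 // => i _; rewrite cm1 expr0.
Qed.
HB.instance Definition _ := isMultiplicative.Build (cmonom 'I_7) PGam hpsi hpsi_mm.

Definition psi' (q : Q7) : PGam := mmap (@malgC (cmonom Gam) C) hpsi q.
Lemma psiE q : psi q = psi' q. Proof. by []. Qed.

Lemma Phi_is_rmorphism : True. Proof. by []. Qed.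

Lemma PhiD p q : Phi (p + q) = Phi p + Phi q. Proof. exact: rmorphD. Qed.
Lemma PhiM p q : Phi (p * q) = Phi p * Phi q. Proof. exact: rmorphM. Qed.
Lemma PhiB p q : Phi (p - q) = Phi p - Phi q. Proof. exact: rmorphB. Qed.
Lemma PhiC c : Phi c%:MP = c%:MP. Proof. by rewrite /Phi mmapC. Qed.
Lemma Phi_tvar g : Phi (tvar g) = trQ g.
Proof. by rewrite /Phi /tvar mmapU -[X in X * _]/(1%:MP) mpolyC1E mul1r /hPhi cmevalU. Qed.
Lemma Phi_nat n : Phi n%:R = n%:R. Proof. exact: rmorph_nat. Qed.

Lemma psiD p q : psi (p + q) = psi p + psi q. Proof. exact: (@rmorphD _ _ (mmap (@malgC (cmonom Gam) C) hpsi)). Qed.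
Lemma psiM p q : psi (p * q) = psi p * psi q. Proof. exact: (@rmorphM _ _ (mmap (@malgC (cmonom Gam) C) hpsi)). Qed.
Lemma psiB p q : psi (p - q) = psi p - psi q. Proof. exact: (@rmorphB _ _ (mmap (@malgC (cmonom Gam) C) hpsi)). Qed.
Lemma psiX p n : psi (p ^+ n) = psi p ^+ n. Proof. exact: (@rmorphXn _ _ (mmap (@malgC (cmonom Gam) C) hpsi)). Qed.
Lemma psi_nat n : psi n%:R = n%:R. Proof. exact: (@rmorph_nat _ _ (mmap (@malgC (cmonom Gam) C) hpsi)). Qed.
Lemma psiC c : psi c%:MP = c%:MP. Proof. by rewrite psiE /psi' mmapC. Qed.
Lemma psiV i : psi (V i) = img_var i.
Proof.
rewrite /V psiE /psi' mmapU -[X in X * _]/(1%:MP) mpolyC1E mul1r /hpsi (bigD1 i) //= cmUU expr1.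
rewrite big1 ?mulr1 // => j /negbTE ne; by rewrite cmU eq_sym ne expr0.
Qed.

Import Num.Theory.

Lemma ideal_map (S1 S2 : comRingType) (f : S1 -> S2)
  (f0 : f 0 = 0) (fD : forall a b, f (a + b) = f a + f b)
  (fM : forall a b, f (a * b) = f a * f b)
  (P1 : S1 -> Prop) (P2 : S2 -> Prop) p :
  ideal_gen P1 p -> (forall s, P1 s -> ideal_gen P2 (f s)) -> ideal_gen P2 (f p).
Proof.
case=> n [a [s [Hs ->]]] H.
elim/big_rec: _ => [|i x _ Hx]; first by rewrite f0; apply: ideal0.
by rewrite fD fM; apply: idealD => //; apply: idealM; apply: H.
Qed.

Lemma two_neq0 : (2 : C) != 0.
Proof. by rewrite pnatr_eq0. Qed.

Lemma J_half p : J (2 * p) -> J p.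
Proof.
move=> H; have := idealM _ _ (((2 : C)^-1)%:MP : Q7) _ H; apply: ideal_eq.
have E : (2 : Q7) = (2 : C)%:MP by rewrite mpolyC_nat.
rewrite mulrA E -mpolyCM mulVf ?two_neq0 //.
by rewrite mpolyC1E mul1r.
Qed.

Lemma tr_rel1 {S1 S2 : comRingType} {f : S1 -> S2}
  (fD : forall a b, f (a + b) = f a + f b) (fB : forall a b, f (a - b) = f a - f b)
  (fM : forall a b, f (a * b) = f a * f b) {a b c d a' b' c' d'} :
  f a = a' -> f b = b' -> f c = c' -> f d = d' ->
  f (a + b - c * d) = a' + b' - c' * d'.
Proof. by move=> <- <- <- <-; rewrite fB fD fM. Qed.

Lemma tr_rel2 {S1 S2 : comRingType} {f : S1 -> S2}
  (fB : forall a b, f (a - b) = f a - f b) {a b a' b'} :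
  f a = a' -> f b = b' -> f (a - b) = a' - b'.
Proof. by move=> <- <-; rewrite fB. Qed.

Lemma Phi_charI p : charI p -> J (Phi p).
Proof.
move=> Hp; apply: (@ideal_map _ _ Phi _ _ _ _ _ _ Hp).
- by rewrite /Phi mmap0.
- exact: PhiD.
- exact: PhiM.
move=> s [[x [y ->]] | [[x [y ->]] | ->]].
- rewrite (tr_rel1 PhiD PhiB PhiM (Phi_tvar _) (Phi_tvar _) (Phi_tvar _) (Phi_tvar _)).
  apply: J_half.
  exact: (model_rel1 _ vu vx1 vx2 vx3 vy1 vy2 vy3 x y).
- rewrite (tr_rel2 PhiB (Phi_tvar _) (Phi_tvar _)).
  exact: (model_rel2 _ vu vx1 vx2 vx3 vy1 vy2 vy3 x y).
- rewrite (tr_rel2 PhiB (Phi_tvar _) (Phi_nat 2)).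
  rewrite /trQ (model_one _ vu vx1 vx2 vx3 vy1 vy2 vy3) subrr.
  exact: ideal0.
Qed.

Section MInd.
Variables (I : choiceType) (P : {malg C[cmonom I]} -> Prop).
Hypotheses (HC : forall c, P c%:MP) (HU : forall i, P << ucm i >>)
  (HD : forall a b, P a -> P b -> P (a + b))
  (HM : forall a b, P a -> P b -> P (a * b)).

Lemma malgU_mul (k1 k2 : cmonom I) :
  << mmul k1 k2 >> = << k1 >> * << k2 >> :> {malg C[cmonom I]}.
Proof. by rewrite malgM_def fgmulUU mulr1. Qed.

Lemma P_mono (k : cmonom I) : P << k >>.
Proof.
suff H : forall n (k : cmonom I), (mdeg k < n)%N -> P << k >> by apply: (H (mdeg k).+1).
elim=> [|n IH] {}k // Hk.
have [->|nk1] := eqVneq k mone; first exact: (HC 1).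
have : finsupp k != fset0.
  apply: contra nk1 => /eqP E; rewrite -mdeg_eq0 mdegE E.
  by rewrite big_seq_fset0.
case/fset0Pn => i Hi.
have Eki : k = mmul (ucm i) (divcm k (ucm i)).
  apply/eqP/cmP => j; rewrite cmM divcmE cmU.
  case: (eqVneq i j) => [<-|_] /=; last by rewrite subn0.
  rewrite subnKC //; move: Hi; rewrite -cmE_neq0; by case: (k i).
rewrite Eki malgU_mul; apply: HM; first exact: HU.
apply: IH; move: Hk; rewrite {1}Eki mdegM mdegU add1n ltnS.
by [].
Qed.

Lemma P_all g : P g.
Proof.
rewrite (monalgE g).
elim/big_rec: _ => [|k x _ Hx]; first by rewrite -malgC0E; apply: HC.
apply: HD => //.
have -> : << g@_k *g k >> = (g@_k)%:MP * << k >>.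
  by rewrite malgM_def fgmulUU mulr1 mul1m.
by apply: HM => //; apply: P_mono.
Qed.
End MInd.

Lemma Phi_img i : Phi (img_var i) = V i.
Proof.
case: i => [[|[|[|[|[|[|[|k]]]]]]] Hi] //;
  rewrite /img_var /= Phi_tvar /trQ.
- by rewrite model_h; congr V; apply: val_inj.
- by rewrite model_c1; congr V; apply: val_inj.
- by rewrite model_c2; congr V; apply: val_inj.
- by rewrite model_c3; congr V; apply: val_inj.
- by rewrite model_hc1; congr V; apply: val_inj.
- by rewrite model_hc2; congr V; apply: val_inj.
- by rewrite model_hc3; congr V; apply: val_inj.
Qed.

Lemma Phi_psi q : Phi (psi q) = q.
Proof.
elim/P_all: q.
- by move=> c; rewrite psiC PhiC.
- by move=> i; rewrite -/(V i) psiV Phi_img.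
- by move=> a b Ha Hb; rewrite psiD PhiD; congr (_ + _).
- by move=> a b Ha Hb; rewrite psiM PhiM; congr (_ * _).
Qed.

Lemma kernel_sub q : charI (psi q) -> J q.
Proof. by move=> /Phi_charI; rewrite Phi_psi. Qed.

Definition tw (n : int) (w : seq letter) : PGam := tvar (n, mkF2 w).

Lemma W1g n m N1 N2 w v w1 w2 : N1 = n + m -> N2 = n - m ->
  red w1 = red (w ++ v) -> red w2 = red (w ++ inv_w v) ->
  charI (tw N1 w1 + tw N2 w2 - tw n w * tw m v).
Proof.
move=> -> -> E1 E2; rewrite /tw (@mkF2_eq _ _ E1) (@mkF2_eq _ _ E2).
apply: idealG; left; exists (n, mkF2 w), (m, mkF2 v).
by rewrite Ginv_mk !Gmul_mk.
Qed.

Lemma Gmul_mk0r N w v : Gmul (N, mkF2 w) (0, mkF2 v) = (N, mkF2 (w ++ v)).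
Proof. by rewrite Gmul_mk addr0. Qed.
Lemma Gmul_mk0l N w v : Gmul (0, mkF2 v) (N, mkF2 w) = (N, mkF2 (v ++ w)).
Proof. by rewrite Gmul_mk add0r. Qed.

Lemma W2g N w v w1 w2 : red w1 = red (w ++ v) -> red w2 = red (v ++ w) ->
  charI (tw N w1 - tw N w2).
Proof.
move=> E1 E2; rewrite /tw (@mkF2_eq _ _ E1) (@mkF2_eq _ _ E2).
apply: idealG; right; left; exists (N, mkF2 w), (0, mkF2 v).
by rewrite Gmul_mk0r Gmul_mk0l.
Qed.

Lemma W0 : charI (tw 0 [::] - 2).
Proof. by apply: idealG; right; right. Qed.

Section Comb.
Variables (S : comRingType) (P : S -> Prop).
Local Notation I := (ideal_gen P).

Lemma ideal_lin7 {e1 e2 e3 e4 e5 e6 e7 : S} (c1 c2 c3 c4 c5 c6 c7 : S) {t : S} :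
  I e1 -> I e2 -> I e3 -> I e4 -> I e5 -> I e6 -> I e7 ->
  c1 * e1 + c2 * e2 + c3 * e3 + c4 * e4 + c5 * e5 + c6 * e6 + c7 * e7 = t -> I t.
Proof.
move=> H1 H2 H3 H4 H5 H6 H7 <-.
by repeat (apply: idealD || apply: idealM).
Qed.

Lemma comb_inv (tm ti t0 : S) : I (tm + ti - t0 * tm) -> I (t0 - 2) -> I (ti - tm).
Proof.
move=> H1 H0; apply: (ideal_lin7 1 tm 0 0 0 0 0 H1 H0 H0 H0 H0 H0 H0); ring.
Qed.

Lemma D1 (U X Y A T0 Q Cw Iv : S) :
  I (T0 - 2) -> I (A + T0 - U * U) -> I (Q + T0 - Y * Y) ->
  I (Cw + Iv - U * Y) -> I (Iv - X) -> I (Q + A - Cw * X) ->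
  I (U ^+ 2 + X ^+ 2 + Y ^+ 2 - U * X * Y - 4).
Proof.
move=> f0 f1 f3 f4 f5 f6.
apply: (ideal_lin7 2 (-1) (-1) X (- X) 1 0 f0 f1 f3 f4 f5 f6 f0); ring.
Qed.

Lemma D2a (U X1 X2 X3 Y1 Y2 Y3 Z Bq : S) :
  I (Y1 + Z - X1 * U) -> I (Bq + Y1 - Y3 * X2) -> I (Bq + Z - X3 * Y2) ->
  I (2 * Y1 - (U * X1 + X2 * Y3 - X3 * Y2)).
Proof.
move=> g1 g2 g3.
apply: (ideal_lin7 1 1 (-1) 0 0 0 0 g1 g2 g3 g3 g3 g3 g3); ring.
Qed.

Lemma D2b (U X1 X2 X3 Y1 Y2 Y3 Zb Yba Xba Baa : S) :
  I (Y2 + Zb - X2 * U) -> I (Y3 - Yba) -> I (Baa + Y2 - Yba * X1) ->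
  I (X3 - Xba) -> I (Baa + Zb - Xba * Y1) ->
  I (2 * Y2 - (U * X2 + X1 * Y3 - X3 * Y1)).
Proof.
move=> h1 h2 h3 h4 h5.
apply: (ideal_lin7 1 (- X1) 1 Y1 (-1) 0 0 h1 h2 h3 h4 h5 h5 h5); ring.
Qed.

Lemma D3 (U X1 X2 X3 Y1 Y2 Y3 R0 R1 Rm S0 Sb : S) :
  I (X3 + R0 - X1 * X2) -> I (R1 + Rm - R0 * U) -> I (Y3 + R1 - Y1 * X2) ->
  I (S0 + Sb - Y2 * X1) -> I (S0 - Y3) -> I (Sb - Rm) ->
  I (2 * Y3 - (U * (X3 - X1 * X2) + Y1 * X2 + Y2 * X1)).
Proof.
move=> k2 k3 k4 k5 k6 k7.
apply: (ideal_lin7 (- U) (-1) 1 1 (-1) (-1) 0 k2 k3 k4 k5 k6 k7 k7); ring.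
Qed.

Lemma D4 (U X1 X2 X3 Y1 Y2 Y3 T2 R0 : S) :
  I (T2 + X3 - Y3 * U) -> I (X3 + R0 - X1 * X2) -> I (T2 + R0 - Y1 * Y2) ->
  I (2 * X3 - (U * Y3 + X1 * X2 - Y1 * Y2)).
Proof.
move=> m1 m2 m3.
apply: (ideal_lin7 1 1 (-1) 0 0 0 0 m1 m2 m3 m3 m3 m3 m3); ring.
Qed.
End Comb.

Lemma W3g m N v w2 : N = - m -> red w2 = red (inv_w v) -> charI (tw N w2 - tw m v).
Proof.
move=> EN Ew.
have H1 := @W1g 0 m m N [::] v v w2 (esym (add0r m)) (etrans EN (esym (sub0r m))) erefl Ew.
exact: comb_inv H1 W0.
Qed.

Notation la := (false, false).
Notation lb := (true, false).
Notation lA := (false, true).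
Notation lB := (true, true).

Lemma der1 w iw : red [::] = red (w ++ inv_w w) -> red iw = red (inv_w w) ->
  charI (tw 1 [::] ^+ 2 + tw 0 w ^+ 2 + tw 1 w ^+ 2 - tw 1 [::] * tw 0 w * tw 1 w - 4).
Proof.
move=> E1 E2.
eapply D1.
- exact: W0.
- exact: (@W1g 1 1 2 0 [::] [::] [::] [::] erefl erefl erefl erefl).
- exact: (@W1g 1 1 2 0 w w (w ++ w) [::] erefl erefl erefl E1).
- exact: (@W1g 1 1 2 0 [::] w w iw erefl erefl erefl E2).
- exact: (@W3g 0 0 w iw erefl E2).
- exact: (@W1g 2 0 2 2 w w (w ++ w) [::] erefl erefl erefl E1).
Qed.

Lemma der2a : charI (2 * tw 1 [:: la] - (tw 1 [::] * tw 0 [:: la] +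
   tw 0 [:: lb] * tw 1 [:: la; lb] - tw 0 [:: la; lb] * tw 1 [:: lb])).
Proof.
eapply D2a.
- exact: (@W1g 0 1 1 (-1) [:: la] [::] [:: la] [:: la] erefl erefl erefl erefl).
- exact: (@W1g 1 0 1 1 [:: la; lb] [:: lb] [:: la; lb; lb] [:: la] erefl erefl erefl erefl).
- exact: (@W1g 0 1 1 (-1) [:: la; lb] [:: lb] [:: la; lb; lb] [:: la] erefl erefl erefl erefl).
Qed.

Lemma der2b : charI (2 * tw 1 [:: lb] - (tw 1 [::] * tw 0 [:: lb] +
   tw 0 [:: la] * tw 1 [:: la; lb] - tw 0 [:: la; lb] * tw 1 [:: la])).
Proof.
eapply D2b.
- exact: (@W1g 0 1 1 (-1) [:: lb] [::] [:: lb] [:: lb] erefl erefl erefl erefl).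
- exact: (@W2g 1 [:: la] [:: lb] [:: la; lb] [:: lb; la] erefl erefl).
- exact: (@W1g 1 0 1 1 [:: lb; la] [:: la] [:: lb; la; la] [:: lb] erefl erefl erefl erefl).
- exact: (@W2g 0 [:: la] [:: lb] [:: la; lb] [:: lb; la] erefl erefl).
- exact: (@W1g 0 1 1 (-1) [:: lb; la] [:: la] [:: lb; la; la] [:: lb] erefl erefl erefl erefl).
Qed.

Lemma der3 : charI (2 * tw 1 [:: la; lb] - (tw 1 [::] * (tw 0 [:: la; lb] - tw 0 [:: la] * tw 0 [:: lb]) +
   tw 1 [:: la] * tw 0 [:: lb] + tw 1 [:: lb] * tw 0 [:: la])).
Proof.
eapply D3.
- exact: (@W1g 0 0 0 0 [:: la] [:: lb] [:: la; lb] [:: la; lB] erefl erefl erefl erefl).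
- exact: (@W1g 0 1 1 (-1) [:: la; lB] [::] [:: la; lB] [:: la; lB] erefl erefl erefl erefl).
- exact: (@W1g 1 0 1 1 [:: la] [:: lb] [:: la; lb] [:: la; lB] erefl erefl erefl erefl).
- exact: (@W1g 1 0 1 1 [:: lb] [:: la] [:: lb; la] [:: lb; lA] erefl erefl erefl erefl).
- exact: (@W2g 1 [:: lb] [:: la] [:: lb; la] [:: la; lb] erefl erefl).
- exact: (@W3g (-1) 1 [:: la; lB] [:: lb; lA] erefl erefl).
Qed.

Lemma der4 : charI (2 * tw 0 [:: la; lb] - (tw 1 [::] * tw 1 [:: la; lb] +
   tw 0 [:: la] * tw 0 [:: lb] - tw 1 [:: la] * tw 1 [:: lb])).
Proof.
eapply D4.
- exact: (@W1g 1 1 2 0 [:: la; lb] [::] [:: la; lb] [:: la; lb] erefl erefl erefl erefl).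
- exact: (@W1g 0 0 0 0 [:: la] [:: lb] [:: la; lb] [:: la; lB] erefl erefl erefl erefl).
- exact: (@W1g 1 1 2 0 [:: la] [:: lb] [:: la; lb] [:: la; lB] erefl erefl erefl erefl).
Qed.

Lemma map_gl {S1 S2 : comRingType} {f : S1 -> S2}
  (fD : forall a b, f (a + b) = f a + f b) (fB : forall a b, f (a - b) = f a - f b)
  (fM : forall a b, f (a * b) = f a * f b) (fX : forall a n, f (a ^+ n) = f a ^+ n)
  (fN : forall n, f n%:R = n%:R)
  {u x1 x2 x3 y1 y2 y3 : S1} {U X1 X2 X3 Y1 Y2 Y3 : S2} :
  f u = U -> f x1 = X1 -> f x2 = X2 -> f x3 = X3 -> f y1 = Y1 -> f y2 = Y2 -> f y3 = Y3 ->
  map f (gl S1 u x1 x2 x3 y1 y2 y3) = gl S2 U X1 X2 X3 Y1 Y2 Y3.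
Proof.
move=> Hu Hx1 Hx2 Hx3 Hy1 Hy2 Hy3; rewrite /gl /=.
by rewrite !fB !fN !fD !fX !fM ?fN ?fB ?fM Hu Hx1 Hx2 Hx3 Hy1 Hy2 Hy3.
Qed.

Lemma J_sub q : J q -> charI (psi q).
Proof.
move=> Hq; apply: (@ideal_map _ _ psi _ _ _ _ _ _ Hq).
- by rewrite psiE /psi' mmap0.
- exact: psiD.
- exact: psiM.
move=> s Hs.
have Hm : psi s \in map psi Jgens by apply: map_f.
have E : map psi (gl _ vu vx1 vx2 vx3 vy1 vy2 vy3) =
   gl _ (tw 1 [::]) (tw 0 [:: la]) (tw 0 [:: lb]) (tw 0 [:: la; lb])
        (tw 1 [:: la]) (tw 1 [:: lb]) (tw 1 [:: la; lb]).
  apply: (map_gl psiD psiB psiM psiX psi_nat).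
  - exact: (psiV (@Ordinal 7 0 isT)).
  - exact: (psiV (@Ordinal 7 1 isT)).
  - exact: (psiV (@Ordinal 7 2 isT)).
  - exact: (psiV (@Ordinal 7 3 isT)).
  - exact: (psiV (@Ordinal 7 4 isT)).
  - exact: (psiV (@Ordinal 7 5 isT)).
  - exact: (psiV (@Ordinal 7 6 isT)).
move: Hm; rewrite -[Jgens]/(gl _ vu vx1 vx2 vx3 vy1 vy2 vy3) E /gl !inE.
case/orP => [/eqP-> | ]; first exact: (@der1 [:: la] [:: lA] erefl erefl).
case/orP => [/eqP-> | ]; first exact: (@der1 [:: lb] [:: lB] erefl erefl).
case/orP => [/eqP-> | ]; first exact: (@der1 [:: la; lb] [:: lB; lA] erefl erefl).
case/orP => [/eqP-> | ]; first exact: der2a.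
case/orP => [/eqP-> | ]; first exact: der2b.
case/orP => [/eqP-> | /eqP->]; first exact: der3.
exact: der4.
Qed.


Section Comb2.
Variables (S : comRingType) (P : S -> Prop).
Local Notation I := (ideal_gen P).

Lemma goodcomb {A B C D pB pC pD : S} :
  I (A + B - C * D) -> I (B - pB) -> I (C - pC) -> I (D - pD) -> I (A - (pC * pD - pB)).
Proof.
move=> e1 e2 e3 e4.
apply: (ideal_lin7 _ _ 1 (-1) D pC 0 0 0 e1 e2 e3 e4 e4 e4 e4); ring.
Qed.

Lemma goodcomb' {A B C D pB pC pD : S} :
  I (B + A - C * D) -> I (B - pB) -> I (C - pC) -> I (D - pD) -> I (A - (pC * pD - pB)).
Proof.
move=> e1 e2 e3 e4.
apply: (ideal_lin7 _ _ 1 (-1) D pC 0 0 0 e1 e2 e3 e4 e4 e4 e4); ring.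
Qed.

Lemma goodtrans {A A' p : S} : I (A - A') -> I (A' - p) -> I (A - p).
Proof.
move=> e1 e2; apply: (ideal_lin7 _ _ 1 1 0 0 0 0 0 e1 e2 e2 e2 e2 e2 e2); ring.
Qed.

Lemma goodD {a b pa pb : S} : I (a - pa) -> I (b - pb) -> I (a + b - (pa + pb)).
Proof.
move=> e1 e2; apply: (ideal_lin7 _ _ 1 1 0 0 0 0 0 e1 e2 e2 e2 e2 e2 e2); ring.
Qed.

Lemma goodM {a b pa pb : S} : I (a - pa) -> I (b - pb) -> I (a * b - pa * pb).
Proof.
move=> e1 e2; apply: (ideal_lin7 _ _ b pa 0 0 0 0 0 e1 e2 e2 e2 e2 e2 e2); ring.
Qed.
End Comb2.

Definition good (n : int) (w : seq letter) := exists q : Q7, charI (tw n w - psi q).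

Lemma good_W1 n m N1 N2 w v w1 w2 : N1 = n + m -> N2 = n - m ->
  red w1 = red (w ++ v) -> red w2 = red (w ++ inv_w v) ->
  good N2 w2 -> good n w -> good m v -> good N1 w1.
Proof.
move=> e1 e2 r1 r2 [q2 H2] [qw Hw] [qv Hv]; exists (qw * qv - q2).
rewrite psiB psiM.
exact: goodcomb _ _ (W1g _ _ _ _ _ _ _ _ e1 e2 r1 r2) H2 Hw Hv.
Qed.

Lemma good_W1' n m N1 N2 w v w1 w2 : N1 = n + m -> N2 = n - m ->
  red w1 = red (w ++ v) -> red w2 = red (w ++ inv_w v) ->
  good N1 w1 -> good n w -> good m v -> good N2 w2.
Proof.
move=> e1 e2 r1 r2 [q2 H2] [qw Hw] [qv Hv]; exists (qw * qv - q2).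
rewrite psiB psiM.
exact: goodcomb' _ _ (W1g _ _ _ _ _ _ _ _ e1 e2 r1 r2) H2 Hw Hv.
Qed.

Lemma good_W2 N w v w1 w2 : red w1 = red (w ++ v) -> red w2 = red (v ++ w) ->
  good N w2 -> good N w1.
Proof.
move=> r1 r2 [q H]; exists q.
exact: goodtrans _ _ (W2g N _ _ _ _ r1 r2) H.
Qed.

Lemma good_var {n w i} : psi (V i) = tw n w -> good n w.
Proof. by move=> E; exists (V i); rewrite E subrr; apply: ideal0. Qed.

Lemma good0_nil : good 0 [::].
Proof. by exists 2; rewrite (psi_nat 2); exact: W0. Qed.

Definition Pw w := good 0 w /\ good 1 w.

Lemma Pw_nil : Pw [::].
Proof. split; first exact: good0_nil. exact: (good_var (psiV (@Ordinal 7 0 isT))). Qed.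

Lemma Pw_a : Pw [:: la].
Proof. split; [exact: (good_var (psiV (@Ordinal 7 1 isT))) | exact: (good_var (psiV (@Ordinal 7 4 isT)))]. Qed.
Lemma Pw_b : Pw [:: lb].
Proof. split; [exact: (good_var (psiV (@Ordinal 7 2 isT))) | exact: (good_var (psiV (@Ordinal 7 5 isT)))]. Qed.
Lemma Pw_ab : Pw [:: la; lb].
Proof. split; [exact: (good_var (psiV (@Ordinal 7 3 isT))) | exact: (good_var (psiV (@Ordinal 7 6 isT)))]. Qed.

Lemma Pw_pos1 c : c.2 = false -> Pw [:: c].
Proof. by case: c => [[] []] //= _; [exact: Pw_b | exact: Pw_a]. Qed.

Lemma Pw_single c : Pw [:: c].
Proof.
case: c => b [] /=; last exact: Pw_pos1.
have H1 := Pw_pos1 (b, false) erefl.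
have H0 := Pw_nil.
case: H1 => H10 _; case: H0 => H00 H01.
split.
- exact: (@good_W1' 0 0 0 0 [::] [:: (b, false)] [:: (b, false)] [:: (b, true)]
    erefl erefl erefl erefl H10 H00 H10).
- case: (Pw_pos1 (b, false) erefl) => _ H11.
  exact: (@good_W1' 1 0 1 1 [::] [:: (b, false)] [:: (b, false)] [:: (b, true)]
    erefl erefl erefl erefl H11 H01 H10).
Qed.

Lemma Pw_rot w v : Pw (v ++ w) -> Pw (w ++ v).
Proof.
case=> H0 H1; split.
- exact: (@good_W2 0 w v (w ++ v) (v ++ w) erefl erefl H0).
- exact: (@good_W2 1 w v (w ++ v) (v ++ w) erefl erefl H1).
Qed.

Lemma Pw_neg x c : c.2 = false -> Pw x -> Pw (x ++ [:: c]) ->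
  Pw (x ++ [:: inv_letter c]).
Proof.
move=> Hc [Hx0 Hx1] [Hxc0 Hxc1].
have [Hc0 _] := Pw_single c.
split.
- exact: (@good_W1' 0 0 0 0 x [:: c] (x ++ [:: c]) (x ++ [:: inv_letter c])
     erefl erefl erefl erefl Hxc0 Hx0 Hc0).
- exact: (@good_W1' 1 0 1 1 x [:: c] (x ++ [:: c]) (x ++ [:: inv_letter c])
     erefl erefl erefl erefl Hxc1 Hx1 Hc0).
Qed.

Lemma red_cc x c : red x = red ((x ++ [:: c]) ++ inv_w [:: c]).
Proof. by rewrite -catA /= red_mid cats0. Qed.

Lemma Pw_cc x c : Pw x -> Pw (x ++ [:: c]) -> Pw (x ++ [:: c; c]).
Proof.
move=> [Hx0 Hx1] [Hxc0 Hxc1].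
have [Hc0 _] := Pw_single c.
have r1 : red (x ++ [:: c; c]) = red ((x ++ [:: c]) ++ [:: c]) by rewrite -catA.
split.
- exact: (@good_W1 0 0 0 0 (x ++ [:: c]) [:: c] (x ++ [:: c; c]) x
     erefl erefl r1 (red_cc x c) Hx0 Hxc0 Hc0).
- exact: (@good_W1 1 0 1 1 (x ++ [:: c]) [:: c] (x ++ [:: c; c]) x
     erefl erefl r1 (red_cc x c) Hx1 Hxc1 Hc0).
Qed.

Fixpoint alt (b : bool) (k : nat) : seq letter :=
  if k is k'.+1 then (b, false) :: alt (~~ b) k' else [::].

Lemma size_alt b k : size (alt b k) = k.
Proof. by elim: k b => [|k IH] b //=; rewrite IH. Qed.

Lemma alt_rcons b k : alt b k.+1 = alt b k ++ [:: (odd k (+) b, false)].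
Proof.
elim: k b => [|k IH] b; first by [].
change (alt b k.+2) with ((b, false) :: alt (~~ b) k.+1).
by rewrite (IH (~~ b)) /= addbN addNb.
Qed.

Lemma alt2 m : alt false (m.+1).*2 = alt false m.*2 ++ [:: la; lb].
Proof.
rewrite doubleS alt_rcons alt_rcons -catA /= odd_double /=.
by [].
Qed.

Lemma alt_decomp w : all (fun l : letter => ~~ l.2) w ->
  (exists p c s, w = p ++ c :: c :: s) \/ (exists b, w = alt b (size w)).
Proof.
elim: w => [|l w IH] /=; first by right; exists true.
case/andP => Hl Hw; case: (IH Hw) => [[p [c [s ->]]]|[b Eb]].
  by left; exists (l :: p), c, s.
case: w Eb Hw {IH} => [|l' w'] Eb Hw.
  by right; exists l.1; case: l Hl => a [].
move: Eb => /= [El' Ew'].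
case: l Hl => a [] //= _.
case: (eqVneq a b) => [Eab|ne].
  by left; exists [::], (a, false), w'; rewrite El' Eab.
right; exists a => /=.
have Eb : b = ~~ a by case: a b ne {El' Ew'} => [] [].
by rewrite El' Ew' Eb negbK size_alt.
Qed.

Lemma Pw_alt m : Pw (alt false m.*2) /\ Pw (alt false (m.+1).*2).
Proof.
elim: m => [|m [IH0 IH1]]; first by split; [exact: Pw_nil | exact: Pw_ab].
split; first exact: IH1.
have r1 : red (alt false (m.+2).*2) = red (alt false (m.+1).*2 ++ [:: la; lb]).
  by rewrite alt2.
have r2 : red (alt false m.*2) = red (alt false (m.+1).*2 ++ inv_w [:: la; lb]).
  rewrite alt2 -catA /=.
  rewrite -[[:: la, lb, _ & _]]/([:: la] ++ [:: lb; lB; lA]) catA.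
  rewrite (red_mid _ lb [:: lA]) -catA /= (red_mid _ la [::]) cats0.
  by [].
case: IH0 => H00 H01; case: IH1 => H10 H11; case: Pw_ab => Hab _.
split.
- exact: (@good_W1 0 0 0 0 _ _ _ _ erefl erefl r1 r2 H00 H10 Hab).
- exact: (@good_W1 1 0 1 1 _ _ _ _ erefl erefl r1 r2 H01 H11 Hab).
Qed.

Lemma Pw_altT m : Pw (alt true (m.+1).*2).
Proof.
have -> : alt true (m.+1).*2 = [:: lb] ++ alt false (m.*2).+1 by [].
apply: Pw_rot.
have -> : alt false (m.*2).+1 ++ [:: lb] = alt false (m.+1).*2.
  by rewrite doubleS (alt_rcons false (m.*2).+1) /= odd_double.
by case: (Pw_alt m).
Qed.

Lemma Pw_all w : Pw w.
Proof.
move: w; suff H : forall L w, (size w < L)%N -> Pw w by move=> w; apply: (H (size w).+1).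
elim=> [|L IH] w Hw; first by rewrite ltn0 in Hw.
suff H2 : forall k w, (size w <= L)%N -> count (fun l : letter => l.2) w = k -> Pw w.
  by apply: (H2 _ w _ erefl).
clear w Hw.
elim=> [|k IHk] w Hs Hc.
- have Hall : all (fun l : letter => ~~ l.2) w.
    by rewrite all_predC has_count Hc.
  case: (ltnP (size w) L) => [lt|ge]; first exact: IH.
  have HL : size w = L by apply/eqP; rewrite eqn_leq Hs ge.
  case: (@alt_decomp w Hall) => [[p [c [s Ew]]]|[b Eb]].
  + rewrite Ew.
    have -> : p ++ [:: c, c & s] = (p ++ [:: c; c]) ++ s by rewrite -catA.
    apply: Pw_rot; rewrite catA.
    have Hsz : size w = (size s + size p).+2 by rewrite Ew size_cat /= addnS addnS addnC.
    apply: Pw_cc; apply: IH.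
    * by rewrite size_cat -HL Hsz ltnS leqW.
    * by rewrite size_cat /= addn1 -HL Hsz size_cat ltnS.
  + rewrite HL in Eb; rewrite {}Eb.
    case: L IH {Hs ge HL} => [|[|n']] IH.
    * exact: Pw_nil.
    * exact: Pw_single.
    have E := odd_double_half n'.
    set m := n'./2 in E.
    case Ho : (odd n') E => /= E; rewrite ?add1n ?add0n in E; rewrite -E.
    *
      set c := (b, false).
      set y := alt (~~ b) (m.*2).+1.
      have Ey : alt b (m.*2).+3 = [:: c] ++ (y ++ [:: c]).
        rewrite /y /c.
        change (alt b (m.*2).+3) with ((b, false) :: alt (~~ b) (m.*2).+2).
        by rewrite (alt_rcons (~~ b) (m.*2).+1) /= odd_double /= negbK.
      rewrite -[X in Pw X]/(alt b (m.*2).+3) Ey; apply: Pw_rot; rewrite -catA.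
      apply: Pw_cc; apply: IH.
      - by rewrite /y size_alt -E ltnS leqW // leqnSn.
      - by rewrite size_cat /y size_alt /= addn1 -E.
    *
      rewrite -[X in Pw X]/(alt b (m.+1).*2).
      case: b; first exact: Pw_altT.
      by case: (Pw_alt m).
- have Hhas : has (fun l : letter => l.2) w by rewrite has_count Hc.
  set i := find (fun l : letter => l.2) w.
  have Hi : (i < size w)%N by rewrite -has_find.
  have Hl : (nth la w i).2 by apply: nth_find.
  have Ew : w = take i w ++ nth la w i :: drop i.+1 w.
    by rewrite -drop_nth // cat_take_drop.
  move: Ew Hl; set l := nth la w i; set p := take i w; set s := drop i.+1 w.
  move=> Ew Hl.
  have El : l = inv_letter (l.1, false).
    by move: Hl; rewrite /inv_letter; case: (l) => a [].
  have Hsz : size w = (size s + size p).+1.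
    by rewrite {1}Ew size_cat /= addnS addnC.
  have Hcnt : count (fun l : letter => l.2) s + count (fun l : letter => l.2) p = k.
    move: Hc; rewrite {1}Ew count_cat /= Hl; lia.
  rewrite Ew El.
  have -> : p ++ inv_letter (l.1, false) :: s = (p ++ [:: inv_letter (l.1, false)]) ++ s.
    by rewrite -catA.
  apply: Pw_rot; rewrite catA.
  apply: (@Pw_neg (s ++ p) (l.1, false) erefl).
  + apply: IH; rewrite size_cat; move: Hs; rewrite Hsz; by [].
  + apply: IHk.
    * by rewrite size_cat /= addn1 size_cat -Hsz.
    * rewrite !count_cat /=; lia.
Qed.

Lemma good_up n w : good (n - 1) w -> good n w -> good (n + 1) w.
Proof.
move=> Hd Hn.
have r : red w = red (w ++ [::]) by rewrite cats0.
case: Pw_nil => _ H1.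
exact: (@good_W1 n 1 (n + 1) (n - 1) w [::] w w erefl erefl r r Hd Hn H1).
Qed.

Lemma good_down n w : good (n + 1) w -> good n w -> good (n - 1) w.
Proof.
move=> Hu Hn.
have r : red w = red (w ++ [::]) by rewrite cats0.
case: Pw_nil => _ H1.
exact: (@good_W1' n 1 (n + 1) (n - 1) w [::] w w erefl erefl r r Hu Hn H1).
Qed.

Lemma good_all n w : good n w.
Proof.
case: (Pw_all w) => H0 H1.
case: n => k.
- suff : good k w /\ good k.+1 w by case=> Ha _; exact: Ha.
  elim: k => [|k [IHa IHb]]; first exact: (conj H0 H1).
  split; first exact: IHb.
  have E1 : (Posz k.+1 - 1 = Posz k)%R by lia.
  have E2 : (Posz k.+1 + 1 = Posz k.+2)%R by lia.
  have := @good_up (Posz k.+1) w; rewrite E1 E2 => HH; exact: HH IHa IHb.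
- suff : good (- Posz k.+1) w by rewrite NegzE.
  suff : good (- Posz k) w /\ good (- Posz k.+1) w by case=> _ Hb; exact: Hb.
  elim: k => [|k [IHa IHb]].
    have E0 : (- Posz 0 = 0)%R by lia.
    have E1 : (- Posz 1 = 0 - 1)%R by lia.
    rewrite E0 E1; split; first exact: H0.
    have E2 : (0 + 1 = 1 :> int)%R by [].
    have := @good_down 0 w; rewrite E2 => HH; exact: HH H1 H0.
  split; first exact: IHb.
  have E1 : (- Posz k.+1 - 1 = - Posz k.+2)%R by lia.
  have E2 : (- Posz k.+1 + 1 = - Posz k)%R by lia.
  have := @good_down (- Posz k.+1) w; rewrite E1 E2 => HH; exact: HH IHa IHb.
Qed.

Lemma surj p : exists q : Q7, charI (p - psi q).
Proof.
elim/P_all: p.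
- by move=> c; exists c%:MP; rewrite psiC subrr; apply: ideal0.
- move=> g; have [q Hq] := good_all g.1 (sval g.2).
  exists q; move: Hq; rewrite /tw -Gam_mk; by [].
- move=> a b [qa Ha] [qb Hb]; exists (qa + qb); rewrite psiD.
  exact: goodD _ _ Ha Hb.
- move=> a b [qa Ha] [qb Hb]; exists (qa * qb); rewrite psiM.
  exact: goodM _ _ Ha Hb.
Qed.

Theorem proposition3p3 :
  (forall p : PGam, exists q : Q7, charI (p - psi q)) /\
  (forall q : Q7, charI (psi q) <-> J q).
Proof.
split; first exact: surj.
by move=> q; split; [exact: kernel_sub | exact: J_sub].
Qed.
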